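(* Let $X$ be a $T_1$ topological space. Then $T''(X)$ is a ring under pointwise addition and multiplication.
   Context: For a topological space $X$, $C(X)$ denotes the set of real-valued continuous functions on $X$. A cozero set in $X$ is a set of the form $coz(g)=\{x\in X: g(x)\neq 0\}$ with $g\in C(X)$. $T''(X)$ denotes the set of all functions $f\colon X\to\mathbb{R}$ for which there is a dense cozero set $U$ of $X$ such that the restriction $f|_U$ is continuous. *)

(* Defs.v *)
From HB Require Import structures.
From mathcomp Require Import all_boot all_order all_algebra.
From mathcomp Require Import all_classical all_reals all_analysis.
Set Implicit Arguments. Unset Strict Implicit. Unset Printing Implicit Defensive.
Import Order.TTheory GRing.Theory Num.Theory numFieldNormedType.Exports.
Local Open Scope classical_set_scope.
Local Open Scope ring_scope.

Definition coz {X : topologicalType} {R : realType} (g : X -> R) : set X :=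
  [set x | g x != 0].

Definition cozero_set {X : topologicalType} (R : realType) (U : set X) : Prop :=
  exists g : X -> R, continuous g /\ U = coz g.

Definition Tpp (X : topologicalType) (R : realType) : set (X -> R) :=
  [set f | exists U : set X, [/\ cozero_set R U, dense U &
                                {within U, continuous f}]].
Arguments Tpp : clear implicits.

(* Main.v *)
Require Import Defs.
From HB Require Import structures.
From mathcomp Require Import all_boot all_order all_algebra.
From mathcomp Require Import all_classical all_reals all_analysis.
Import Order.TTheory GRing.Theory Num.Theory numFieldNormedType.Exports.
Local Open Scope classical_set_scope.
Local Open Scope ring_scope.

Lemma coz_open (X : topologicalType) (R : realType) (U : set X) :
  cozero_set R U -> open U.
Proof.
case=> g [cg ->].
have -> : coz g = g @^-1` [set x : R | x != 0] by [].
by apply: open_comp => [x _|]; [exact: cg | exact: open_neq].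
Qed.

Lemma cozI (X : topologicalType) (R : realType) (U V : set X) :
  cozero_set R U -> cozero_set R V -> cozero_set R (U `&` V).
Proof.
case=> g [cg ->]; case=> h [ch ->].
exists (fun x => g x * h x); split.
  by move=> x; apply: continuousM; [exact: cg | exact: ch].
apply/seteqP; split => x; rewrite /coz /= mulf_eq0 negb_or.
  by case=> -> ->.
by case/andP.
Qed.

Lemma TppT (X : topologicalType) (R : realType) (f : X -> R) :
  continuous f -> Tpp X R f.
Proof.
move=> cf; exists setT; split.
- exists (fun _ => 1 : R); split; first by move=> x; exact: cvg_cst.
  by apply/seteqP; split => x //= _; rewrite /coz /= oner_neq0.
- move=> O O0 _; case: O0 => x Ox; by exists x.
- exact: continuous_subspaceT.
Qed.

Lemma Tpp2 (X : topologicalType) (R : realType) (op : R -> R -> R) :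
  (forall (Y : topologicalType) (f g : Y -> R), continuous f -> continuous g ->
     continuous (fun x => op (f x) (g x))) ->
  forall f g, Tpp X R f -> Tpp X R g -> Tpp X R (fun x => op (f x) (g x)).
Proof.
move=> hop f g [U [cU dU fU]] [V [cV dV gV]].
exists (U `&` V); split.
- exact: cozI.
- by apply: denseI => //; exact: coz_open cU.
- apply: (hop _ (from_subspace (U `&` V) f) (from_subspace (U `&` V) g)).
  + by apply: continuous_subspaceW fU; exact: subIsetl.
  + by apply: continuous_subspaceW gV; exact: subIsetr.
Qed.

Theorem theorem2p1 (X : topologicalType) (R : realType)
  (hT1 : @accessible_space X) :
  [/\ Tpp X R (fun _ => 0), Tpp X R (fun _ => 1),
      (forall f g, Tpp X R f -> Tpp X R g -> Tpp X R (fun x => f x + g x)),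
      (forall f, Tpp X R f -> Tpp X R (fun x => - f x)) &
      (forall f g, Tpp X R f -> Tpp X R g -> Tpp X R (fun x => f x * g x))].
Proof.
split.
- by apply: TppT; exact: cst_continuous.
- by apply: TppT; exact: cst_continuous.
- apply: Tpp2 => Y f g cf cg x; exact: (@continuousD R R^o Y f g x (cf x) (cg x)).
- move=> f [U [cU dU fU]]; exists U; split => //.
  by move=> x; apply: continuousN; exact: fU.
- apply: Tpp2 => Y f g cf cg x; exact: (@continuousM R Y f g x (cf x) (cg x)).
Qed.
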